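(* In the two-asset bid-ask model described in the context, let $\delta^b_t=S^b_t/S^b_{t-1}$ and $\delta^a_t=S^a_t/S^a_{t-1}$. If for all $t=1,\dots,T$ and all $c>0$, $$\mathbb{P}(\delta^b_t\le c\,|\,\mathcal{F}_{t-1})\,\mathbb{P}(\delta^a_t\ge c\,|\,\mathcal{F}_{t-1})>0\quad\text{a.s.},$$ then (NA2) holds.
   Context: $(\Omega,\mathcal{F},(\mathcal{F}_t)_{t=0,\dots,T},\mathbb{P})$ filtered complete probability space, $\mathcal{F}_0$ trivial. $d=2$. For each $t$, $S^b_t,S^a_t$ are $\mathcal{F}_t$-measurable random variables with $0<S^b_t\le S^a_t$ a.s., and the solvency cone is $\mathbf{K}_t=\{x\in\mathbb{R}^2:\ x_1+y\,x_2\ge0\ \text{for all }y\in[S^b_t,S^a_t]\}$. $L^0(\Gamma,\mathcal{F}_t)$: $\mathcal{F}_t$-measurable random vectors a.s. in $\Gamma$. $\mathsf{A}_{t,T}=\sum_{u=t}^TL^0(-\mathbf{K}_u,\mathcal{F}_u)$. (NA2): for every $t$ and $\eta_t\in L^0(\mathbb{R}^2,\mathcal{F}_t)$, if $(\eta_t+\mathsf{A}_{t,T})\cap L^0(\mathbf{K}_T,\mathcal{F}_T)\neq\emptyset$ then $\eta_t\in L^0(\mathbf{K}_t,\mathcal{F}_t)$. *)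

(* Defs.v *)
From HB Require Import structures.
From mathcomp Require Import all_boot all_order all_algebra.
From mathcomp Require Import all_classical all_reals all_analysis.
Set Implicit Arguments. Unset Strict Implicit. Unset Printing Implicit Defensive.
Import Order.TTheory GRing.Theory Num.Theory.
Local Open Scope classical_set_scope.
Local Open Scope ring_scope.

Section Defs.
Context {d : measure_display} {Omega : measurableType d} {R : realType}.

Definition Fmeas (G : set (set Omega)) (f : Omega -> R) : Prop :=
  forall B : set R, measurable B -> G (f @^-1` B).

Definition Fmeas2 (G : set (set Omega)) (f : Omega -> R * R) : Prop :=
  Fmeas G (fun w => (f w).1) /\ Fmeas G (fun w => (f w).2).

Definition filtration (F : nat -> set (set Omega)) : Prop :=
  (forall t, sigma_algebra setT (F t)) /\
  (forall t, F t `<=` measurable) /\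
  (forall s t, (s <= t)%N -> F s `<=` F t).

Definition solv_cone (sb sa : R) : set (R * R) :=
  [set x | forall y : R, sb <= y <= sa -> 0 <= x.1 + y * x.2].

Definition neg_solv_cone (sb sa : R) : set (R * R) :=
  [set x | solv_cone sb sa (- x.1, - x.2)].

(* xi is (a representative of) an element of L^0(Gamma, G):
   G-measurable and a.s. in the random set Gamma *)
Definition L0 (P : probability Omega R) (G : set (set Omega))
  (Gamma : Omega -> set (R * R)) (xi : Omega -> R * R) : Prop :=
  Fmeas2 G xi /\ {ae P, forall w, Gamma w (xi w)}.

Definition cond_prob_version (P : probability Omega R) (G : set (set Omega))
  (A : set Omega) (g : Omega -> R) : Prop :=
  Fmeas G g /\ P.-integrable setT (fun w => (g w)%:E) /\
  forall B, G B -> (\int[P]_(w in B) (g w)%:E = P (A `&` B))%E.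

(* (NA2) for the bid-ask model; for eta_t + A_{t,T} meeting L^0(K_T,F_T),
   an element of A_{t,T} is written as sum_{u=t}^T xi_u, xi_u in L^0(-K_u,F_u) *)
Definition NA2 (P : probability Omega R) (F : nat -> set (set Omega))
  (Sb Sa : nat -> Omega -> R) (T : nat) : Prop :=
  forall t : nat, (t <= T)%N ->
  forall eta : Omega -> R * R, Fmeas2 (F t) eta ->
  forall xi : nat -> Omega -> R * R,
    (forall u, (t <= u <= T)%N ->
       L0 P (F u) (fun w => neg_solv_cone (Sb u w) (Sa u w)) (xi u)) ->
    L0 P (F T) (fun w => solv_cone (Sb T w) (Sa T w))
       (fun w => ((eta w).1 + \sum_(t <= u < T.+1) (xi u w).1,
                  (eta w).2 + \sum_(t <= u < T.+1) (xi u w).2)) ->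
    L0 P (F t) (fun w => solv_cone (Sb t w) (Sa t w)) eta.

End Defs.

(* Main.v *)
Require Import Defs.
From HB Require Import structures.
From mathcomp Require Import all_boot all_order all_algebra.
From mathcomp Require Import all_classical all_reals all_analysis.
From mathcomp Require Import measurable_realfun lra zify.
Import Order.TTheory GRing.Theory Num.Theory.
Local Open Scope classical_set_scope.
Local Open Scope ring_scope.
Set Implicit Arguments. Unset Strict Implicit.

Section Helpers.
Context {d : measure_display} {Omega : measurableType d} {R : realType}.

Lemma FmeasP (G : set (set Omega)) (HG : sigma_algebra setT G) (f : Omega -> R) :
  Fmeas G f <-> measurable_fun (setT : set (g_sigma_algebraType G)) f.
Proof.
split.
- move=> Hf _ B mB; rewrite setTI.
  have -> : (measurable : set (set (g_sigma_algebraType G))) = G.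
    exact: measurable_g_measurableTypeE.
  exact: Hf.
- move=> Hf B mB.
  have := Hf measurableT B mB; rewrite setTI.
  have -> : (measurable : set (set (g_sigma_algebraType G))) = G.
    exact: measurable_g_measurableTypeE.
  by [].
Qed.

Lemma GmeasE (G : set (set Omega)) (HG : sigma_algebra setT G) :
  (measurable : set (set (g_sigma_algebraType G))) = G.
Proof. exact: measurable_g_measurableTypeE. Qed.

Lemma Fmeas_add G (HG : sigma_algebra setT G) (f g : Omega -> R) :
  Fmeas G f -> Fmeas G g -> Fmeas G (fun w => f w + g w).
Proof.
move=> /(FmeasP HG) mf /(FmeasP HG) mg; apply/(FmeasP HG).
exact: measurable_realfun.measurable_funD.
Qed.

Lemma Fmeas_mul G (HG : sigma_algebra setT G) (f g : Omega -> R) :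
  Fmeas G f -> Fmeas G g -> Fmeas G (fun w => f w * g w).
Proof.
move=> /(FmeasP HG) mf /(FmeasP HG) mg; apply/(FmeasP HG).
exact: measurable_realfun.measurable_funM.
Qed.

Lemma Fmeas_opp G (HG : sigma_algebra setT G) (f : Omega -> R) :
  Fmeas G f -> Fmeas G (fun w => - f w).
Proof.
move=> /(FmeasP HG) mf; apply/(FmeasP HG).
exact: measurable_realfun.measurable_funN.
Qed.

Lemma Fmeas_sub G G' (f : Omega -> R) : G `<=` G' -> Fmeas G f -> Fmeas G' f.
Proof. by move=> GG' Hf B mB; apply: GG'; exact: Hf. Qed.

Lemma Fmeas_measurable G (f : Omega -> R) : G `<=` measurable -> Fmeas G f ->
  measurable_fun setT f.
Proof. by move=> Gm Hf _ B mB; rewrite setTI; apply: Gm; exact: Hf. Qed.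

Lemma Fmeas_sum G (HG : sigma_algebra setT G) (a b : nat) (f : nat -> Omega -> R) :
  (forall u, (a <= u < b)%N -> Fmeas G (f u)) ->
  Fmeas G (fun w => \sum_(a <= u < b) f u w).
Proof.
move=> Hf; elim: b Hf => [|b IH] Hf.
  under [X in Fmeas _ X]funext => w do rewrite big_geq//.
  by apply/(FmeasP HG); exact: measurable_cst.
have Hf' : forall u, (a <= u < b)%N -> Fmeas G (f u).
  by move=> u /andP[au ub]; apply: Hf; rewrite au (ltn_trans ub).
have [ab|ab] := leqP a b.
  have -> : (fun w => \sum_(a <= u < b.+1) f u w) =
     (fun w => \sum_(a <= u < b) f u w + f b w).
    by apply: funext => w; rewrite big_nat_recr.
  apply: (Fmeas_add HG); first exact: IH.
  by apply: Hf; rewrite ab ltnSn.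
have -> : (fun w => \sum_(a <= u < b.+1) f u w) = (fun w => \sum_(a <= u < b) f u w).
  by apply: funext => w; rewrite big_geq// [RHS]big_geq// ltnW.
exact: IH.
Qed.

Lemma Gset_lt0 G (HG : sigma_algebra setT G) (h : Omega -> R) :
  Fmeas G h -> G [set w | h w < 0].
Proof.
move=> Hh; have := Hh `]-oo, 0[%classic (measurable_itv _).
congr G.
Qed.

Lemma Gset_ge0 G (HG : sigma_algebra setT G) (h : Omega -> R) :
  Fmeas G h -> G [set w | 0 <= h w].
Proof.
move=> Hh; have := Hh `[0, +oo[%classic (measurable_itv _).
by congr G; apply/seteqP; split => w; rewrite /preimage /= in_itv /= andbT.
Qed.

Lemma Gset_gt0 G (HG : sigma_algebra setT G) (h : Omega -> R) :
  Fmeas G h -> G [set w | 0 < h w].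
Proof.
move=> Hh; have := Hh `]0, +oo[%classic (measurable_itv _).
by congr G; apply/seteqP; split => w; rewrite /preimage /= in_itv /= andbT.
Qed.

Lemma GsetI G (HG : sigma_algebra setT G) (A B : set Omega) :
  G A -> G B -> G (A `&` B).
Proof.
have := @measurableI _ (g_sigma_algebraType G) A B.
by rewrite (GmeasE HG).
Qed.


Lemma negl0 (P : probability Omega R) (A : set Omega) :
  measure_is_complete P -> P.-negligible A -> P A = 0%E.
Proof.
move=> cP nA; have mA := cP _ nA.
by apply/(negligibleP _ mA).
Qed.

Lemma cond_pos (P : probability Omega R) (G : set (set Omega))
  (HG : sigma_algebra setT G) (Gm : G `<=` measurable) (A C : set Omega) (g : Omega -> R) :
  measure_is_complete P ->
  cond_prob_version P G A g -> G C ->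
  {ae P, forall w, g w != 0} ->
  {ae P, forall w, C w -> A w -> False} ->
  {ae P, forall w, ~ C w}.
Proof.
move=> cP [Fg [_ Hint]] GC g0 AC.
have mg : measurable_fun setT g := Fmeas_measurable Gm Fg.
set C1 := C `&` [set w | 0 < g w].
set C2 := C `&` [set w | g w < 0].
have GC1 : G C1 by apply: GsetI => //; exact: Gset_gt0.
have GC2 : G C2 by apply: GsetI => //; exact: Gset_lt0.
have mC1 := Gm _ GC1; have mC2 := Gm _ GC2.
have PAC B : B `<=` C -> P (A `&` B) = 0%E.
  move=> BC; apply: negl0 => //; apply: negligibleS AC => w [Aw Bw] /=.
  by move/(_ (BC _ Bw) Aw).
have I1 : (\int[P]_(w in C1) (g w)%:E = 0)%E.
  by rewrite Hint // PAC // => w [].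
have I2 : (\int[P]_(w in C2) (g w)%:E = 0)%E.
  by rewrite Hint // PAC // => w [].
have mg1 : measurable_fun C1 (EFin \o g).
  apply/measurable_EFinP; exact: measurable_funS mg.
have mg2 : measurable_fun C2 (EFin \o g).
  apply/measurable_EFinP; exact: measurable_funS mg.
have A1 : ae_eq P C1 (EFin \o g) (cst 0%E).
  apply/(ae_eq_integral_abs _ mC1 mg1).
  rewrite -I1; apply: eq_integral => w; rewrite inE => -[_ /= gw].
  by rewrite /= ger0_norm // ltW.
have A2 : ae_eq P C2 (EFin \o g) (cst 0%E).
  apply/(ae_eq_integral_abs _ mC2 mg2).
  transitivity (\int[P]_(w in C2) - (g w)%:E)%E.
    apply: eq_integral => w; rewrite inE => -[_ /= gw].
    by rewrite /= ltr0_norm // EFinN.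
  rewrite integralN ?I2 ?oppe0 //.
  rewrite [X in (X +? _)%E]integral0_eq; first exact: fin_num_adde_defr.
  move=> w [_ /= gw]; rewrite funeposE /=.
  by apply/max_r; rewrite lee_fin ltW.
move: A1 A2 g0; apply: filterS3 => w H1 H2 gw Cw.
have [gp|gn|ge] := ltgtP (g w) 0.
- by move: (H2 (conj Cw gp)) => /= [] /eqP; rewrite (negbTE gw).
- by move: (H1 (conj Cw gn)) => /= [] /eqP; rewrite (negbTE gw).
- by move: gw; rewrite ge eqxx.
Qed.

Lemma key (P : probability Omega R) (G : set (set Omega))
  (HG : sigma_algebra setT G) (Gm : G `<=` measurable)
  (b0 a0 b1 a1 : Omega -> R) (X : Omega -> R * R) (g1 g2 : Omega -> R) :
  measure_is_complete P ->
  Fmeas G b0 -> Fmeas G a0 -> Fmeas2 G X ->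
  {ae P, forall w, 0 < b0 w} -> {ae P, forall w, 0 < a0 w} ->
  {ae P, forall w, b1 w <= a1 w} ->
  cond_prob_version P G [set w | b1 w / b0 w <= 1] g1 ->
  cond_prob_version P G [set w | 1 <= a1 w / a0 w] g2 ->
  {ae P, forall w, 0 < g1 w * g2 w} ->
  {ae P, forall w, solv_cone (b1 w) (a1 w) (X w)} ->
  {ae P, forall w, solv_cone (b0 w) (a0 w) (X w)}.
Proof.
move=> cP Fb0 Fa0 [FX1 FX2] b0p a0p ba1 cg1 cg2 gp cone1.
have g10 : {ae P, forall w, g1 w != 0}.
  by apply: filterS gp => w /=; apply: contraTN => /eqP ->; rewrite mul0r ltxx.
have g20 : {ae P, forall w, g2 w != 0}.
  by apply: filterS gp => w /=; apply: contraTN => /eqP ->; rewrite mulr0 ltxx.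
set Cb := [set w | (X w).1 + b0 w * (X w).2 < 0] `&` [set w | 0 <= (X w).2].
set Ca := [set w | (X w).1 + a0 w * (X w).2 < 0] `&` [set w | 0 <= - (X w).2].
have GCb : G Cb.
  apply: GsetI => //; last exact: Gset_ge0.
  by apply: Gset_lt0 => //; apply: Fmeas_add => //; apply: Fmeas_mul.
have GCa : G Ca.
  apply: GsetI => //; last by apply: Gset_ge0 => //; exact: Fmeas_opp.
  by apply: Gset_lt0 => //; apply: Fmeas_add => //; apply: Fmeas_mul.
have nCb : {ae P, forall w, ~ Cb w}.
  apply: (cond_pos HG Gm cP cg1 GCb g10).
  move: b0p ba1 cone1; apply: filterS3 => w bp ba cw [/= h1 h2] /=.
  rewrite ler_pdivrMr // mul1r => hb.
  have := cw (b1 w); rewrite /= lexx ba => /(_ isT) h3.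
  nra.
have nCa : {ae P, forall w, ~ Ca w}.
  apply: (cond_pos HG Gm cP cg2 GCa g20).
  move: a0p ba1 cone1; apply: filterS3 => w ap ba cw [/= h1 h2] /=.
  rewrite ler_pdivlMr // mul1r => hb.
  have := cw (a1 w); rewrite /= lexx ba => /(_ isT) h3.
  nra.
move: nCb nCa; apply: filterS2 => w hb ha y /andP[y1 y2].
have [x2p|x2n] := lerP 0 (X w).2.
  have : ~ ((X w).1 + b0 w * (X w).2 < 0) by move=> h; apply: hb; split.
  move/negP; rewrite -leNgt => h; nra.
have : ~ ((X w).1 + a0 w * (X w).2 < 0).
  by move=> h; apply: ha; split => //=; rewrite oppr_ge0 ltW.
move/negP; rewrite -leNgt => h; nra.
Qed.

Lemma cone_sub (b a : R) (z x : R * R) : solv_cone b a z -> neg_solv_cone b a x ->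
  solv_cone b a (z.1 - x.1, z.2 - x.2).
Proof.
move=> hz hx y hy; have := hz y hy; have := hx y hy; rewrite /=.
by rewrite mulrBr; lra.
Qed.

End Helpers.

Unset Implicit Arguments.

Theorem corollary9p4 (d : measure_display) (Omega : measurableType d)
  (R : realType) (P : probability Omega R)
  (F : nat -> set (set Omega)) (T : nat) (Sb Sa : nat -> Omega -> R) :
  measure_is_complete P ->
  filtration F ->
  (forall A, F 0%N A -> P A = 0%E \/ P A = 1%E) ->
  (forall t, (t <= T)%N -> Fmeas (F t) (Sb t) /\ Fmeas (F t) (Sa t)) ->
  (forall t, (t <= T)%N -> {ae P, forall w, 0 < Sb t w <= Sa t w}) ->
  (forall t, (1 <= t <= T)%N -> forall c : R, 0 < c ->
     exists g1 g2 : Omega -> R,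
       cond_prob_version P (F t.-1) [set w | Sb t w / Sb t.-1 w <= c] g1 /\
       cond_prob_version P (F t.-1) [set w | c <= Sa t w / Sa t.-1 w] g2 /\
       {ae P, forall w, 0 < g1 w * g2 w}) ->
  NA2 P F Sb Sa T.
Proof.
move=> cP [Fsig [Fm Fmono]] _ HS Hpos Hcond.
move=> t tT eta Feta xi Hxi HT; split => //.
pose Z k w := ((eta w).1 + \sum_(t <= u < k) (xi u w).1,
               (eta w).2 + \sum_(t <= u < k) (xi u w).2).
have ZS k : (t <= k)%N -> forall w, Z k w =
    ((Z k.+1 w).1 - (xi k w).1, (Z k.+1 w).2 - (xi k w).2).
  by move=> tk w; rewrite /Z /= !big_nat_recr //= !addrA !addrK.
have FZ k : (t <= k)%N -> (k <= T)%N -> Fmeas2 (F k) (Z k.+1).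
  move=> tk kT; split.
  - apply: (Fmeas_add (Fsig k)).
    by apply: (Fmeas_sub (Fmono t k _)); [lia | case: Feta].
    apply: (Fmeas_sum (Fsig k)) => u /andP[tu uk].
    have [[F1 _] _] := Hxi u (ltac:(apply/andP; split; lia)).
    by apply: (Fmeas_sub (Fmono u k _)); [lia | exact: F1].
  - apply: (Fmeas_add (Fsig k)).
      by apply: (Fmeas_sub (Fmono t k _)); [lia | case: Feta].
    apply: (Fmeas_sum (Fsig k)) => u /andP[tu uk].
    have [[_ F2] _] := Hxi u (ltac:(apply/andP; split; lia)).
    by apply: (Fmeas_sub (Fmono u k _)); [lia | exact: F2].
have step k : (t <= k)%N -> (k <= T)%N ->
    {ae P, forall w, solv_cone (Sb k w) (Sa k w) (Z k.+1 w)} ->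
    {ae P, forall w, solv_cone (Sb k w) (Sa k w) (Z k w)}.
  move=> tk kT h; have [_ hx] := Hxi k (ltac:(apply/andP; split; lia)).
  move: h hx; apply: filterS2 => w h1 h2.
  by rewrite ZS //; apply: cone_sub.
have main n : (n <= T - t)%N ->
    {ae P, forall w, solv_cone (Sb (T - n)%N w) (Sa (T - n)%N w) (Z (T - n)%N w)}.
  elim: n => [_|n IH hn].
    rewrite subn0; apply: step => //.
    by case: HT.
  have IH' := IH (ltac:(lia)).
  have ek : (T - n = (T - n.+1).+1)%N by lia.
  rewrite ek in IH'.
  set k := (T - n.+1)%N in IH' *.
  apply: step; [lia | lia |].
  have [g1 [g2 [c1 [c2 gp]]]] := Hcond k.+1 (ltac:(apply/andP; split; lia)) 1 ltr01.
  have [Fb0 Fa0] := HS k (ltac:(lia)).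
  have p0 := Hpos k (ltac:(lia)).
  have p1 := Hpos k.+1 (ltac:(lia)).
  apply: (key (Fsig k) (Fm k) cP Fb0 Fa0 (FZ k _ _) _ _ _ c1 c2 gp IH').
  - lia.
  - lia.
  - by apply: filterS p0 => w /andP[].
  - by apply: filterS p0 => w /andP[h1 h2]; apply: lt_le_trans h2.
  - by apply: filterS p1 => w /andP[].
have := main (T - t)%N (leqnn _).
have -> : (T - (T - t) = t)%N by lia.
apply: filterS => w; rewrite /Z /= !big_geq //.
by rewrite !addr0; case: (eta w).
Qed.
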